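(* Let $n=p_1^{\alpha_1}p_2^{\alpha_2}p_3^{\alpha_3}p_4^{\alpha_4}$ where $p_1,p_2,p_3,p_4$ are distinct primes and $\alpha_i\geq 1$ are integers. Then $\mathbb{AG}(\mathbb{Z}_n)$ is perfect if and only if $\alpha_i=1$ for all $i\in\{1,2,3,4\}$.
   Context: For a commutative ring $R$ with unity, the annihilating-ideal graph $\mathbb{AG}(R)$ is the simple graph whose vertex set is the set of all non-zero ideals of $R$ with non-zero annihilator, two distinct vertices $I,J$ being adjacent if and only if $IJ=0$. A graph $G$ is perfect if $\omega(H)=\chi(H)$ for every induced subgraph $H$ of $G$. *)

(* Defs.v *)
From HB Require Import structures.
From mathcomp Require Import all_boot all_order all_algebra.
Set Implicit Arguments. Unset Strict Implicit. Unset Printing Implicit Defensive.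
Import GRing.Theory.
Local Open Scope ring_scope.

Section Ideals.
Variable R : finComNzRingType.

Definition is_ideal (I : {set R}) : bool :=
  [&& (0 : R) \in I,
      [forall x in I, forall y in I, x - y \in I] &
      [forall r : R, forall x in I, r * x \in I]].

Definition ann (I : {set R}) : {set R} := [set r : R | [forall x in I, r * x == 0]].

(* product ideal IJ is zero  <=>  every product x*y (x in I, y in J) is zero
   (IJ is generated by these products) *)
Definition ideal_prod_zero (I J : {set R}) : bool :=
  [forall x in I, forall y in J, x * y == 0].

Definition AG_vertices : {set {set R}} :=
  [set I : {set R} | [&& is_ideal I, I != [set 0] & ann I != [set 0]]].

Definition AG_adj : rel {set R} := fun I J => (I != J) && ideal_prod_zero I J.
End Ideals.

Section Graphs.
Variable T : finType.
Variable e : rel T.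

Definition is_clique (K : {set T}) : bool :=
  [forall x in K, forall y in K, (x != y) ==> e x y].

Definition clique_number (S : {set T}) : nat :=
  \max_(K : {set T} | (K \subset S) && is_clique K) #|K|.

Definition proper_coloring (S : {set T}) (f : {ffun T -> 'I_#|T|}) : bool :=
  [forall x in S, forall y in S, ((x != y) && e x y) ==> (f x != f y)].

(* chromatic number of the subgraph induced on S: minimum number of colours
   used by a proper colouring (#|T| colours always suffice) *)
Definition chromatic_number (S : {set T}) : nat :=
  \big[minn/#|T|]_(f : {ffun T -> 'I_#|T|} | proper_coloring S f) #|f @: S|.

Definition perfect (V : {set T}) : Prop :=
  forall S : {set T}, S \subset V -> clique_number S = chromatic_number S.
End Graphs.

Definition AG_perfect (R : finComNzRingType) : Prop :=
  perfect (@AG_adj R) (AG_vertices R).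

(* Main.v *)
Require Import Defs.
From mathcomp Require Import all_boot all_order all_algebra.
From mathcomp Require Import zify ring.
Set Implicit Arguments. Unset Strict Implicit. Unset Printing Implicit Defensive.

Section GraphLemmas.
Variable T : finType.
Variable e : rel T.
Implicit Types S K V : {set T}.

Lemma clique_le S K : K \subset S -> is_clique e K -> #|K| <= clique_number e S.
Proof. by move=> KS cK; apply: (@leq_bigmax_cond _ _ (fun K => #|K|) K); rewrite KS cK. Qed.

Lemma clique_number_le S m :
  (forall K, K \subset S -> is_clique e K -> #|K| <= m) -> clique_number e S <= m.
Proof. by move=> H; apply/bigmax_leqP => K /andP[]; apply: H. Qed.

Lemma bigmin_seq_le (I : eqType) (r : seq I) (P : pred I) (F : I -> nat) x i :
  i \in r -> P i -> \big[minn/x]_(j <- r | P j) F j <= F i.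
Proof.
elim: r => [//|a r IH]; rewrite inE big_cons => /orP[/eqP <- Pi|ir Pi].
  by rewrite Pi geq_minl.
by case: (P a); rewrite ?IH // (leq_trans (geq_minr _ _)) ?IH.
Qed.

Lemma chrom_le S f : proper_coloring e S f -> chromatic_number e S <= #|f @: S|.
Proof. by move=> pf; rewrite /chromatic_number bigmin_seq_le // mem_index_enum. Qed.

Lemma chrom_ge S m : m <= #|T| ->
  (forall f, proper_coloring e S f -> m <= #|f @: S|) -> m <= chromatic_number e S.
Proof.
move=> HT H; rewrite /chromatic_number; elim/big_ind: _ => //.
  by move=> x y hx hy; rewrite leq_min hx hy.
Qed.

Lemma clique_card_col S K f : K \subset S -> is_clique e K -> proper_coloring e S f ->
  #|K| <= #|f @: S|.
Proof.
move=> KS cK pf.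
have <- : #|f @: K| = #|K|.
  apply: card_in_imset => x y xK yK fxy; apply/eqP; apply/negPn/negP => nxy.
  move/forallP: cK => /(_ x); rewrite xK => /forallP /(_ y); rewrite yK nxy /= => exy.
  move/forallP: pf => /(_ x); rewrite (subsetP KS _ xK) => /forallP /(_ y).
  by rewrite (subsetP KS _ yK) nxy exy fxy eqxx.
by apply: subset_leq_card; apply: imsetS.
Qed.

Lemma omega_le_chi S : clique_number e S <= chromatic_number e S.
Proof.
apply: chrom_ge.
  by apply: clique_number_le => K _ _; apply: max_card.
by move=> f pf; apply: clique_number_le => K KS cK; apply: clique_card_col pf.
Qed.

Lemma perfect_of_cert V :
  (forall S, S \subset V -> exists f K, [/\ proper_coloring e S f, K \subset S,
       is_clique e K & #|f @: S| <= #|K|]) -> perfect e V.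
Proof.
move=> H S SV; apply/eqP; rewrite eqn_leq omega_le_chi /=.
have [f [K [pf KS cK le]]] := H S SV.
by apply: leq_trans (chrom_le pf) (leq_trans le (clique_le KS cK)).
Qed.
End GraphLemmas.

Section Phi.
Variable T : finType.
Variable e : rel T.
Implicit Types S K V : {set T}.

Lemma cliqueP K : (forall x y, x \in K -> y \in K -> x != y -> e x y) -> is_clique e K.
Proof.
move=> H; apply/forallP => x; apply/implyP => xK; apply/forallP => y; apply/implyP => yK.
by apply/implyP; apply: H.
Qed.

Lemma properP S (H5 : 5 <= #|T|) (c : T -> 'I_5) :
  (forall x y, x \in S -> y \in S -> x != y -> e x y -> c x != c y) ->
  proper_coloring e S [ffun x => widen_ord H5 (c x)].
Proof.
move=> H; apply/forallP => x; apply/implyP => xS; apply/forallP => y; apply/implyP => yS.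
apply/implyP => /andP[nxy exy]; rewrite !ffunE; apply/eqP => /(congr1 val) /= /val_inj.
by apply/eqP; apply: H.
Qed.

Lemma col_card S (H5 : 5 <= #|T|) (c : T -> 'I_5) :
  #|[ffun x => widen_ord H5 (c x)] @: S| <= #|c @: S|.
Proof.
have -> : [ffun x => widen_ord H5 (c x)] @: S = widen_ord H5 @: (c @: S).
  by rewrite -imset_comp; apply: eq_imset => x; rewrite ffunE.
exact: leq_imset_card.
Qed.

Lemma perfect_phi V (phi : T -> {set 'I_4}) :
  4 < #|T| -> {in V &, injective phi} -> {in V, forall x, phi x != set0} ->
  {in V &, forall x y, e x y = (x != y) && [disjoint phi x & phi y]} -> perfect e V.
Proof.
move=> H5 phiI phi0 eE; apply: perfect_of_cert => S SV.
have inV x : x \in S -> x \in V by move=> xS; apply: (subsetP SV).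
have eS x y : x \in S -> y \in S -> e x y = (x != y) && [disjoint phi x & phi y].
  by move=> xS yS; apply: eE; apply: inV.
case: (boolP [exists x in S, exists y in S, (x != y) && e x y]) => [Hed|Hned]; last first.
  exists [ffun x => widen_ord H5 ord0].
  case: (set_0Vmem S) => [S0|[x xS]].
    exists set0; rewrite S0 sub0set imset0 cards0; split => //.
      by apply/forallP => x; rewrite inE.
    by apply: cliqueP => ? ? ; rewrite inE.
  exists [set x]; split.
  - apply: properP => y z yS zS nyz eyz; exfalso; move/negP: Hned; apply.
    by apply/existsP; exists y; rewrite yS; apply/existsP; exists z; rewrite zS nyz eyz.
  - by rewrite sub1set.
  - by apply: cliqueP => y z; rewrite !inE => /eqP -> /eqP ->; rewrite eqxx.
  - rewrite cards1; apply: leq_trans (col_card _ _ _) _.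
    have -> : (fun _ : T => @ord0 4) @: S = [set ord0].
      apply/setP => i; rewrite inE; apply/imsetP/eqP => [[? _ ->]//|->].
      by exists x.
    by rewrite cards1.
case/existsP: Hed => x1 /andP[x1S /existsP[y1 /andP[y1S /andP[nxy1 exy1]]]].
pose H := [set i : 'I_4 | [set i] \in phi @: S].
pose H' := if H == set0 then [set ord0] else H.
have HH' : H \subset H'.
  by rewrite /H'; case: (H =P set0) => [->|_]; rewrite ?sub0set.
have H'0 : H' != set0.
  rewrite /H'; case: (H =P set0) => [_|/eqP //].
  by apply/set0Pn; exists ord0; rewrite inE.
pose c x := if [pick i in phi x :&: H'] is Some i then widen_ord (leqnSn 4) i
            else ord_max.
have big2 z : z \in S -> phi z :&: H' = set0 -> 1 < #|phi z|.
  move=> zS zH; have := phi0 z (inV z zS); rewrite -card_gt0.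
  rewrite leq_eqVlt => /orP[/eqP/esym|] //.
  move/eqP/cards1P => [i phii]; exfalso.
  have : i \in phi z :&: H' by rewrite inE phii set11 /= (subsetP HH') // inE -phii imset_f.
  by rewrite zH inE.
have cP x y : x \in S -> y \in S -> x != y -> e x y -> c x != c y.
  move=> xS yS nxy; rewrite eS // nxy /= => dxy.
  rewrite /c; case: pickP => [i|nx]; case: pickP => [j|ny].
  - rewrite !inE => /andP[jy _] /andP[ix _]; apply/eqP => /(congr1 val) /= /val_inj ij.
    by move: dxy; rewrite -setI_eq0 => /eqP/setP/(_ i); rewrite inE ix ij jy inE.
  - by move=> _; apply/eqP => /(congr1 val) /=; move: (ltn_ord i); rewrite ltn_neqAle => /andP[/eqP].
  - by move=> _; apply/eqP => /(congr1 val) /= /esym; move: (ltn_ord j); rewrite ltn_neqAle => /andP[/eqP].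
  - exfalso.
    have nx0 : phi x :&: H' = set0 by apply/setP => i; rewrite [RHS]inE; exact: nx.
    have ny0 : phi y :&: H' = set0 by apply/setP => i; rewrite [RHS]inE; exact: ny.
    have := big2 x xS nx0; have := big2 y yS ny0.
    have sub : phi x :|: phi y \subset ~: H'.
      apply/subsetP => i; rewrite !inE => /orP[] ii; apply/negP => iH.
        have : i \in phi x :&: H' by rewrite inE ii.
        by rewrite nx0 inE.
      have : i \in phi y :&: H' by rewrite inE ii.
      by rewrite ny0 inE.
    have := subset_leq_card sub; rewrite cardsU.
    move: dxy; rewrite -setI_eq0 => /eqP ->; rewrite cards0 subn0.
    have := cardsC H'; rewrite card_ord.
    move: H'0; rewrite -card_gt0 => h1 h2 h3 h4 h5.
    have h6 := leq_trans (leq_add h5 h4) h3.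
    move: h1 h2 h6; set u := #|H'|; set v := #|~: H'|; clearbody u v; lia.
have symE x y : x \in S -> y \in S -> e x y = e y x.
  by move=> xS yS; rewrite !eS // eq_sym disjoint_sym.
exists [ffun x => widen_ord H5 (c x)].
have propc := properP H5 cP.
have cS : c @: S \subset (widen_ord (leqnSn 4) @: H') :|: [set ord_max].
  apply/subsetP => _ /imsetP[z zS ->]; rewrite /c; case: pickP => [i|_]; rewrite !inE.
    by move=> /andP[_ iH]; rewrite imset_f.
  by rewrite eqxx orbT.
have cSle : #|c @: S| <= #|H'| + 1.
  apply: leq_trans (subset_leq_card cS) _; apply: leq_trans (leq_of_leqif (leq_card_setU _ _)) _.
  by rewrite cards1 leq_add2r leq_imset_card.
case: (H =P set0) => [H0|Hn0].
  exists [set x1; y1]; split => //.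
  - by rewrite subUset !sub1set x1S y1S.
  - apply: cliqueP => x y; rewrite !inE => /orP[]/eqP-> /orP[]/eqP->; rewrite ?eqxx //.
    by move=> _; rewrite symE.
  - apply: leq_trans (col_card _ _ _) _; rewrite cards2 nxy1.
    by move: cSle; rewrite /H' H0 eqxx cards1.
have H'E : H' = H by rewrite /H'; case: (H =P set0).
pose KH := [set x in S | #|phi x| == 1].
have KHS : KH \subset S by apply/subsetP => x; rewrite inE => /andP[].
have KHc x y : x \in KH -> y \in KH -> x != y -> e x y.
  rewrite !inE => /andP[xS /cards1P[i phix]] /andP[yS /cards1P[j phiy]] nxy.
  rewrite eS // nxy /= phix phiy disjoints1 inE; apply/negP => /eqP ij.
  by move/negP: nxy; apply; apply/eqP; apply: (phiI x y (inV x xS) (inV y yS)); rewrite phix phiy ij.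
pose g x := odflt ord0 [pick i in phi x].
have HKH : #|H| <= #|KH|.
  apply: leq_trans (leq_imset_card g KH); apply: subset_leq_card.
  apply/subsetP => i; rewrite inE => /imsetP[x xS phix]; apply/imsetP; exists x.
    by rewrite inE xS -phix cards1.
  rewrite /g; case: pickP => [j|/(_ i)]; rewrite -phix ?inE; last by rewrite eqxx.
  by move/eqP ->.
case: (boolP [exists z in S, phi z :&: H' == set0]) => [/existsP[z0 /andP[z0S /eqP z0H]]|nz].
  have z0KH : z0 \notin KH.
    rewrite inE z0S /=; have := big2 z0 z0S z0H; rewrite ltn_neqAle => /andP[/negPf]. 
    by rewrite eq_sym => ->.
  exists (z0 |: KH); split => //.
  - by rewrite subUset sub1set z0S KHS.
  - have ez0 y : y \in KH -> y != z0 -> e z0 y.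
      move=> yKH nyz; move: (yKH); rewrite inE => /andP[yS /cards1P[i phiy]].
      rewrite eS // eq_sym nyz /= phiy disjoint_sym disjoints1.
      apply/negP => iz0.
      have : i \in phi z0 :&: H' by rewrite inE iz0 H'E inE -phiy imset_f.
      by rewrite z0H inE.
    apply: cliqueP => x y; move=> /setU1P[->|xKH] /setU1P[->|yKH]; rewrite ?eqxx //.
    + by move=> n; apply: ez0 => //; rewrite eq_sym.
    + by move=> n; rewrite symE ?ez0 // (subsetP KHS).
    + exact: KHc.
  - apply: leq_trans (col_card _ _ _) _; rewrite cardsU1 z0KH add1n.
    by apply: leq_trans cSle _; rewrite H'E addn1.
exists KH; split => //.
- exact: cliqueP KHc.
- apply: leq_trans (col_card _ _ _) _; apply: leq_trans HKH; rewrite -H'E.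
  apply: leq_trans (leq_imset_card (widen_ord (leqnSn 4)) H'); apply: subset_leq_card.
  apply/subsetP => _ /imsetP[z zS ->]; rewrite /c; case: pickP => [i|nzi].
    by rewrite inE => /andP[_ iH]; rewrite imset_f.
  exfalso; move/negP: nz; apply; apply/existsP; exists z; rewrite zS /=.
  by apply/eqP/setP => i; rewrite [RHS]inE; exact: nzi.
Qed.
End Phi.

Section Zn.
Import GRing.Theory.
Local Open Scope ring_scope.
Variable n : nat.
Hypothesis hn : (1 < n)%N.

Definition Id (d : nat) : {set 'Z_n} := [set x : 'Z_n | (d %| x)%N].

Lemma valZ m : ((m%:R : 'Z_n) : nat) = (m %% n)%N.
Proof. exact: val_Zp_nat. Qed.

Lemma Zn_eq0 m : ((m%:R : 'Z_n) == 0) = (n %| m)%N.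
Proof. by rewrite -val_eqE /= valZ /dvdn. Qed.

Lemma ltZ (x : 'Z_n) : (x < n)%N.
Proof. by rewrite -[n in (_ < n)%N](Zp_cast hn) ltn_ord. Qed.

Lemma dvd_valZ d m : (d %| n)%N -> (d %| (m%:R : 'Z_n))%N = (d %| m)%N.
Proof. by move=> dn; rewrite valZ /dvdn (modn_dvdm _ dn). Qed.

Lemma in_Id d m : (d %| n)%N -> ((m%:R : 'Z_n) \in Id d) = (d %| m)%N.
Proof. by move=> dn; rewrite inE dvd_valZ. Qed.

Lemma Zn_n : (n%:R : 'Z_n) = 0.
Proof. by apply/eqP; rewrite Zn_eq0 dvdnn. Qed.

Lemma Zn_sub (x y : 'Z_n) : x - y = ((x : nat) + (n - y))%:R.
Proof.
by rewrite natrD natrB ?Zn_n ?sub0r ?natr_Zp // ltnW // ltZ.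
Qed.

Lemma Zn_mul (x y : 'Z_n) : x * y = ((x : nat) * y)%:R.
Proof. by rewrite natrM !natr_Zp. Qed.

Lemma Id_ideal d : (d %| n)%N -> is_ideal (Id d).
Proof.
move=> dn; apply/and3P; split.
- by rewrite inE dvdn0.
- apply/forallP => x; apply/implyP; rewrite inE => dx; apply/forallP => y; apply/implyP.
  rewrite inE => dy; rewrite Zn_sub in_Id // dvdn_add // dvdn_sub //.
- apply/forallP => r; apply/forallP => x; apply/implyP; rewrite inE => dx.
  by rewrite Zn_mul in_Id // dvdn_mull.
Qed.

Lemma Id_prod0 d e : (d %| n)%N -> (e %| n)%N ->
  ideal_prod_zero (Id d) (Id e) = (n %| d * e)%N.
Proof.
move=> dn en; apply/idP/idP.
  move/forallP => /(_ d%:R); rewrite in_Id // dvdnn /= => /forallP /(_ e%:R).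
  by rewrite in_Id // dvdnn /= -natrM Zn_eq0.
move=> h; apply/forallP => x; apply/implyP; rewrite inE => dx.
apply/forallP => y; apply/implyP; rewrite inE => dy.
by rewrite Zn_mul Zn_eq0 (dvdn_trans h) // dvdn_mul.
Qed.

Lemma Id_n : Id n = [set 0].
Proof.
apply/setP => x; rewrite !inE; apply/idP/eqP => [|->]; last by rewrite dvdn0.
rewrite /dvdn modn_small ?ltZ // => /eqP x0; exact: val_inj.
Qed.

Lemma Id_ne0 d : (d %| n)%N -> (0 < d < n)%N -> Id d != [set 0].
Proof.
move=> dn /andP[d0 dlt]; apply/negP => /eqP/setP/(_ d%:R).
rewrite in_Id // dvdnn inE => /esym/eqP/eqP.
by rewrite Zn_eq0 gtnNdvd.
Qed.

Lemma ann_ne0 d : (d %| n)%N -> (1 < d)%N -> ann (Id d) != [set 0].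
Proof.
move=> dn d1; apply/negP => /eqP/setP/(_ (n %/ d)%:R).
have n0 : (0 < n)%N by apply: ltn_trans hn.
rewrite inE; have -> : [forall x in Id d, (n %/ d)%:R * x == 0].
  apply/forallP => x; apply/implyP; rewrite inE => /dvdnP[k kx].
  by rewrite -[x in _ * x]natr_Zp -natrM Zn_eq0 kx mulnCA divnK // dvdn_mull.
rewrite inE => /esym/eqP/eqP; rewrite Zn_eq0 gtnNdvd //.
  by rewrite divn_gt0 ?(ltn_trans _ d1) // dvdn_leq.
by rewrite ltn_Pdiv.
Qed.

Definition gen (I : {set 'Z_n}) : nat := gcdn n (\big[gcdn/0%N]_(x in I) (x : nat)).

Lemma gen_dvd I : (gen I %| n)%N.
Proof. exact: dvdn_gcdl. Qed.

Lemma gen_gt0 I : (0 < gen I)%N.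
Proof. by rewrite gcdn_gt0 (ltn_trans _ hn). Qed.

Section Ideal.
Variable I : {set 'Z_n}.
Hypothesis hI : is_ideal I.

Lemma I0 : 0 \in I. Proof. by case/and3P: hI. Qed.
Lemma Isub x y : x \in I -> y \in I -> x - y \in I.
Proof. by case/and3P: hI => _ /forallP/(_ x)/implyP H _ xI yI; move/H: xI => /forallP/(_ y)/implyP; apply. Qed.
Lemma Imul r x : x \in I -> r * x \in I.
Proof. by case/and3P: hI => _ _ /forallP/(_ r)/forallP/(_ x)/implyP. Qed.

Lemma gcd_closed a b : (a%:R : 'Z_n) \in I -> (b%:R : 'Z_n) \in I -> ((gcdn a b)%:R : 'Z_n) \in I.
Proof.
move=> aI bI; case: (posnP a) => [->|a0]; first by rewrite gcd0n.
case: (egcdnP b a0) => km kn E _.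
have -> : gcdn a b = (km * a - kn * b)%N by rewrite E addKn.
rewrite natrB; last by rewrite E leq_addr.
by rewrite !natrM Isub // Imul.
Qed.

Lemma gen_in : ((gen I)%:R : 'Z_n) \in I.
Proof.
rewrite /gen; apply: gcd_closed; first by rewrite Zn_n I0.
elim/big_ind: _ => //; first by rewrite I0.
  by move=> a b; apply: gcd_closed.
by move=> x xI; rewrite natr_Zp.
Qed.

Lemma ideal_gen : I = Id (gen I).
Proof.
apply/setP => x; rewrite inE; apply/idP/idP => [xI|gx].
  apply: dvdn_trans (dvdn_gcdr _ _) _.
  by apply: (biggcdn_inf x).
rewrite -(natr_Zp x) -(divnK gx) natrM; exact: Imul gen_in.
Qed.
End Ideal.

End Zn.

Lemma not_dvd_prod (s : seq nat) p : prime p -> all prime s -> p \notin s ->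
  (p %| \prod_(q <- s) q) = false.
Proof.
move=> pp ps pns; rewrite Euclid_dvd_prod // big_has; apply/hasPn => q qs /=.
rewrite dvdn_prime2 //; last by apply: (allP ps).
by apply/eqP => pq; move: pns; rewrite pq qs.
Qed.

Lemma prod_dvd (s : seq nat) : all prime s -> uniq s -> forall m,
  (\prod_(p <- s) p %| m) = all (fun p => p %| m) s.
Proof.
elim: s => [|p s IH] /=; first by move=> _ _ m; rewrite big_nil dvd1n.
move=> /andP[pp ps] /andP[pns us] m; rewrite big_cons Gauss_dvd ?IH //.
by rewrite prime_coprime // not_dvd_prod.
Qed.

Lemma sqf_dvd (s : seq nat) : all prime s -> uniq s -> forall d e,
  d %| \prod_(p <- s) p -> (forall p, p \in s -> p %| d -> p %| e) -> d %| e.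
Proof.
elim: s => [|p s IH] /=; first by move=> _ _ d e; rewrite big_nil dvdn1 => /eqP ->.
move=> /andP[pp ps] /andP[pns us] d e; rewrite big_cons => dpm H.
have p0 : 0 < p by apply: prime_gt0.
case: (boolP (p %| d)) => pd.
  have pe : p %| e by apply: H; rewrite ?inE ?eqxx.
  rewrite -(divnK pd) -(divnK pe) dvdn_pmul2r //.
  apply: IH => //.
    by move: dpm; rewrite -{1}(divnK pd) mulnC dvdn_pmul2l.
  move=> q qs qd; have qq : prime q by apply: (allP ps).
  have qd' : q %| d by rewrite -(divnK pd) dvdn_mulr.
  have : q %| e %/ p * p by rewrite divnK //; apply: H; rewrite ?inE ?qs ?orbT.
  rewrite Euclid_dvdM // => /orP[//|]; rewrite dvdn_prime2 // => /eqP qp.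
  by move: pns; rewrite -qp qs.
apply: IH => //.
  by move: dpm; rewrite Gauss_dvdr // coprime_sym prime_coprime.
by move=> q qs; apply: H; rewrite inE qs orbT.
Qed.

Lemma all4 (s : seq nat) (Q : pred nat) : size s = 4 ->
  all Q s = [forall i : 'I_4, Q (nth 0 s i)].
Proof.
move=> s4; apply/allP/forallP => [H i|H p ps].
  by apply: H; rewrite mem_nth // s4.
have ip : index p s < 4 by rewrite -s4 index_mem.
by have := H (Ordinal ip); rewrite /= nth_index.
Qed.

Lemma disjE (A B : {set 'I_4}) : [disjoint A & B] = [forall i, ~~ ((i \in A) && (i \in B))].
Proof.
rewrite -setI_eq0; apply/eqP/forallP => [h i|h].
  by move/setP: h => /(_ i); rewrite !inE => ->.
by apply/setP => i; rewrite !inE; apply/negbTE/h.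
Qed.

Lemma card_setZ n : 1 < n -> #|{set 'Z_n}| = 2 ^ n.
Proof. by move=> hn; rewrite -cardsT -powersetT card_powerset cardsT card_ord Zp_cast. Qed.

Theorem perfect_sqf (s : seq nat) n : size s = 4 -> all prime s -> uniq s ->
  n = \prod_(p <- s) p -> AG_perfect 'Z_n.
Proof.
move=> s4 ps us nE.
have n2 : 2 < n.
  move: s4 ps nE; clear us; case: s => [|a [|b [|c [|d [|]]]]] //= _.
  rewrite !big_cons big_nil => /and5P[/prime_gt1 ha /prime_gt1 hb /prime_gt1 hc /prime_gt1 hd _] ->.
  nia.
have hn : 1 < n by apply: ltn_trans n2.
pose P (i : 'I_4) := nth 0 s i.
pose phi (I : {set 'Z_n}) := [set i : 'I_4 | ~~ (P i %| gen I)].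
have vertP I : I \in AG_vertices 'Z_n -> [/\ is_ideal I, I != [set 0%R] & ann I != [set 0%R]].
  by rewrite inE => /and3P.
apply: (@perfect_phi _ _ _ phi).
- rewrite card_setZ //; apply: leq_trans (_ : 2 ^ 3 <= _) => //.
  by rewrite leq_exp2l.
- move=> I J /vertP[hI _ _] /vertP[hJ _ _] phiE.
  rewrite (ideal_gen hn hI) (ideal_gen hn hJ); congr Id; apply/eqP; rewrite eqn_dvd.
  have key (A B : {set 'Z_n}) : phi A = phi B -> gen A %| gen B.
    move=> pAB; apply: (sqf_dvd ps us); first by rewrite -nE gen_dvd.
    move=> p pS pA; have ip : index p s < 4 by rewrite -s4 index_mem.
    move/setP: pAB => /(_ (Ordinal ip)); rewrite !inE /P /= nth_index // pA /=.
    by move/esym/negbFE.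
  by rewrite !key.
- move=> I /vertP[hI I0 _]; apply/negP => /eqP/setP ph0.
  have : n %| gen I.
    rewrite {1}nE prod_dvd // all4 //; apply/forallP => i.
    by have := ph0 i; rewrite !inE => /negbFE.
  move=> ng; have gn : gen I = n by apply/eqP; rewrite eqn_dvd ng gen_dvd.
  by move: I0; rewrite (ideal_gen hn hI) gn Id_n // eqxx.
- move=> I J /vertP[hI _ _] /vertP[hJ _ _]; rewrite /AG_adj; congr (_ && _).
  have -> : ideal_prod_zero I J = ideal_prod_zero (Id n (gen I)) (Id n (gen J)).
    by rewrite -!(ideal_gen hn).
  rewrite Id_prod0 ?gen_dvd // {1}nE prod_dvd // all4 // disjE.
  by apply: eq_forallb => i; rewrite !inE Euclid_dvdM ?negb_and ?negbK //; apply: (allP ps); rewrite mem_nth // s4.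
Qed.

Definition c5 (i j : 'I_5) : bool := ((i.+1 %% 5) == j) || ((j.+1 %% 5) == i).

Ltac c5case i := case: i => [[|[|[|[|[|?]]]]] ?] //.

Lemma c5_irr i : ~~ c5 i i.
Proof. by c5case i. Qed.

Lemma c5_tri i j k : ~~ [&& c5 i j, c5 j k & c5 i k].
Proof. by c5case i; c5case j; c5case k. Qed.

Lemma c5_sep i j : i != j -> exists k, [&& c5 k i, ~~ c5 k j & k != j].
Proof.
c5case i; c5case j => _.
all: first [ by exists (@Ordinal 5 0 isT) | by exists (@Ordinal 5 1 isT) | by exists (@Ordinal 5 2 isT)
           | by exists (@Ordinal 5 3 isT) | by exists (@Ordinal 5 4 isT) ].
Qed.

Lemma card3 (U : finType) (A : {set U}) a b c : a \in A -> b \in A -> c \in A ->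
  a != b -> a != c -> b != c -> 3 <= #|A|.
Proof.
move=> aA bA cA ab ac bc.
have -> : 3 = #|a |: (b |: [set c])|.
  by rewrite !cardsU1 cards1 !inE negb_or ab ac bc.
by apply: subset_leq_card; apply/subsetP => x; rewrite !inE => /orP[|/orP[]] /eqP ->.
Qed.

Section C5.
Variable T : finType.
Variable e : rel T.

Lemma C5_np (V : {set T}) (idx : 'I_5 -> T) :
  3 <= #|T| -> (forall i, idx i \in V) -> (forall i j, e (idx i) (idx j) = c5 i j) ->
  ~ perfect e V.
Proof.
move=> T3 iV E per.
pose S := idx @: [set: 'I_5].
have SV : S \subset V by apply/subsetP => _ /imsetP[i _ ->].
have inS x : x \in S -> exists i, x = idx i by case/imsetP => i _ ->; exists i.
have om : clique_number e S <= 2.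
  apply: clique_number_le => K KS cK; rewrite leqNgt; apply/negP => K3.
  have /set0Pn[x xK] : K != set0 by rewrite -card_gt0 (ltn_trans _ K3).
  have K2 : 1 < #|K :\ x| by move: K3; rewrite (cardsD1 x K) xK.
  have /set0Pn[y yK'] : K :\ x != set0 by rewrite -card_gt0 (ltn_trans _ K2).
  have K1 : 0 < #|K :\ x :\ y| by move: K2; rewrite (cardsD1 y (K :\ x)) yK'.
  have /set0Pn[z zK''] : K :\ x :\ y != set0 by rewrite -card_gt0.
  move: yK' zK''; rewrite !inE => /andP[yx yK] /andP[zy /andP[zx zK]].
  have cl u v : u \in K -> v \in K -> u != v -> e u v.
    move=> uK vK uv; move/forallP: cK => /(_ u); rewrite uK => /forallP /(_ v).
    by rewrite vK uv.
  have [i xi] := inS x (subsetP KS x xK).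
  have [j yj] := inS y (subsetP KS y yK).
  have [k zk] := inS z (subsetP KS z zK).
  have := c5_tri i j k.
  have xy : x != y by rewrite eq_sym.
  have yz : y != z by rewrite eq_sym.
  have xz : x != z by rewrite eq_sym.
  by rewrite -!E -xi -yj -zk (cl x y) ?(cl y z) ?(cl x z).
have ch : 3 <= chromatic_number e S.
  apply: chrom_ge => // f pf.
  have dif i j : c5 i j -> f (idx i) != f (idx j).
    move=> cij; have nij : idx i != idx j.
      apply/eqP => eij; have := c5_irr i; rewrite -E eij E.
      have -> : c5 j j = c5 i j by rewrite -!E eij.
      by rewrite cij.
    move/forallP: pf => /(_ (idx i)); rewrite imset_f ?inE // => /forallP /(_ (idx j)).
    by rewrite imset_f ?inE //= nij E cij.
  have fS i : f (idx i) \in f @: S by rewrite imset_f // imset_f ?inE.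
  pose o0 := @Ordinal 5 0 isT; pose o1 := @Ordinal 5 1 isT; pose o2 := @Ordinal 5 2 isT.
  pose o3 := @Ordinal 5 3 isT; pose o4 := @Ordinal 5 4 isT.
  have d01 := dif o0 o1 isT; have d12 := dif o1 o2 isT; have d23 := dif o2 o3 isT.
  have d34 := dif o3 o4 isT; have d40 := dif o4 o0 isT.
  case: (eqVneq (f (idx o2)) (f (idx o0))) => [e20|n20].
    case: (eqVneq (f (idx o3)) (f (idx o1))) => [e31|n31].
      apply: (card3 (fS o0) (fS o1) (fS o4)) => //.
        by rewrite eq_sym.
      by rewrite -e31.
    apply: (card3 (fS o1) (fS o2) (fS o3)) => //.
    by rewrite eq_sym.
  apply: (card3 (fS o0) (fS o1) (fS o2)) => //.
  by rewrite eq_sym.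
move: om ch; rewrite (per S SV) => a b.
by have := leq_trans b a.
Qed.
End C5.

Lemma ndvdX x y k : prime x -> prime y -> x != y -> (x %| y ^ k) = false.
Proof. by move=> px py xy; rewrite Euclid_dvdX // dvdn_prime2 // (negPf xy). Qed.

Lemma dvdX x k : prime x -> 0 < k -> x %| x ^ k.
Proof. by move=> px k0; rewrite Euclid_dvdX // dvdnn. Qed.

Lemma gt1M_l x y : 1 < x -> 0 < y -> 1 < x * y.
Proof. by move=> hx hy; apply: leq_trans hx _; rewrite leq_pmulr. Qed.
Lemma gt1M_r x y : 0 < x -> 1 < y -> 1 < x * y.
Proof. by move=> hx hy; rewrite mulnC gt1M_l. Qed.

Theorem nonperf (p q r s a1 b c d n : nat) :
  prime p -> prime q -> prime r -> prime s ->
  p != q -> p != r -> p != s -> q != r -> q != s -> r != s ->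
  0 < a1 -> 0 < b -> 0 < c -> 0 < d ->
  n = p ^ a1.+1 * q ^ b * r ^ c * s ^ d -> ~ AG_perfect 'Z_n.
Proof.
move=> pp pq pr ps npq npr nps nqr nqs nrs a0 b0 c0 d0 nE.
have hp := prime_gt1 pp; have hq := prime_gt1 pq; have hr := prime_gt1 pr; have hs := prime_gt1 ps.
have nqp : q != p by rewrite eq_sym. have nrp : r != p by rewrite eq_sym.
have nsp : s != p by rewrite eq_sym. have nrq : r != q by rewrite eq_sym.
have nsq : s != q by rewrite eq_sym. have nsr : s != r by rewrite eq_sym.
set A := p ^ a1 in nE; set Q := q ^ b in nE; set R := r ^ c in nE; set S := s ^ d in nE.
have hA : 0 < A by rewrite expn_gt0 prime_gt0.
have hQ : 1 < Q by rewrite -(expn0 q) ltn_exp2l.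
have hR : 1 < R by rewrite -(expn0 r) ltn_exp2l.
have hS : 1 < S by rewrite -(expn0 s) ltn_exp2l.
have pA : p %| A := dvdX pp a0.
have qQ : q %| Q := dvdX pq b0.
have rR : r %| R := dvdX pr c0.
have sS : s %| S := dvdX ps d0.
have nE' : n = p * A * Q * R * S by rewrite nE expnS.
pose d0' := Q * R * S. pose d1 := p * A * S. pose d2 := p * Q * R.
pose d3 := A * R * S. pose d4 := p * A * Q.
pose dd (i : 'I_5) := nth 0 [:: d0'; d1; d2; d3; d4] i.
have hQ0 := ltnW hQ; have hR0 := ltnW hR; have hS0 := ltnW hS.
have hn : 1 < n by rewrite nE'; do 3 apply: gt1M_l => //; apply: gt1M_l.
have vert i : [/\ dd i %| n, 1 < dd i & dd i < n].
  case: i => [[|[|[|[|[|?]]]]] ?] //=.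
  - have e : n = d0' * (p * A) by rewrite nE' /d0'; ring.
    have g1 : 1 < d0' by rewrite /d0'; exact: gt1M_l (gt1M_l hQ hR0) hS0.
    by rewrite e dvdn_mulr //; split => //; rewrite ltn_Pmulr // ?(ltnW g1) //; exact: gt1M_l hp hA.
  - have e : n = d1 * (Q * R) by rewrite nE' /d1; ring.
    have g1 : 1 < d1 by rewrite /d1; exact: gt1M_l (gt1M_l hp hA) hS0.
    by rewrite e dvdn_mulr //; split => //; rewrite ltn_Pmulr // ?(ltnW g1) //; exact: gt1M_l hQ hR0.
  - have e : n = d2 * (A * S) by rewrite nE' /d2; ring.
    have g1 : 1 < d2 by rewrite /d2; exact: gt1M_l (gt1M_l hp hQ0) hR0.
    by rewrite e dvdn_mulr //; split => //; rewrite ltn_Pmulr // ?(ltnW g1) //; exact: gt1M_r hA hS.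
  - have e : n = d3 * (p * Q) by rewrite nE' /d3; ring.
    have g1 : 1 < d3 by rewrite /d3; exact: gt1M_l (gt1M_r hA hR) hS0.
    by rewrite e dvdn_mulr //; split => //; rewrite ltn_Pmulr // ?(ltnW g1) //; exact: gt1M_l hp hQ0.
  - have e : n = d4 * (R * S) by rewrite nE' /d4; ring.
    have g1 : 1 < d4 by rewrite /d4; exact: gt1M_l (gt1M_l hp hA) hQ0.
    by rewrite e dvdn_mulr //; split => //; rewrite ltn_Pmulr // ?(ltnW g1) //; exact: gt1M_l hR hS0.
have pX : ~~ (p %| Q * Q * R * R * S) by rewrite !Euclid_dvdM // !ndvdX.
have pX' : ~~ (p %| Q * R * R * S * S) by rewrite !Euclid_dvdM // !ndvdX.
have nq : ~~ (n %| d1 * d3).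
  have xn : q %| n by rewrite nE' dvdn_mulr // dvdn_mulr // dvdn_mull.
  apply/negP => h; move: (dvdn_trans xn h).
  by rewrite /d1 /d3 !Euclid_dvdM // !ndvdX // (dvdn_prime2 pq pp) (negPf nqp).
have nr : ~~ (n %| d1 * d4).
  have xn : r %| n by rewrite nE' dvdn_mulr // dvdn_mull.
  apply/negP => h; move: (dvdn_trans xn h).
  by rewrite /d1 /d4 !Euclid_dvdM // !ndvdX // (dvdn_prime2 pr pp) (negPf nrp).
have ns : ~~ (n %| d2 * d4).
  have xn : s %| n by rewrite nE' dvdn_mull.
  apply/negP => h; move: (dvdn_trans xn h).
  by rewrite /d2 /d4 !Euclid_dvdM // !ndvdX // (dvdn_prime2 ps pp) (negPf nsp).
have n02 : ~~ (n %| d0' * d2).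
  apply/negP; have -> : d0' * d2 = p * (Q * Q * R * R * S) by rewrite /d0' /d2; ring.
  have -> : n = p * (A * (Q * R * S)) by rewrite nE'; ring.
  rewrite dvdn_pmul2l ?prime_gt0 // => h.
  by move/negP: pX; apply; apply: (dvdn_trans pA); apply: dvdn_trans h; exact: dvdn_mulr.
have n03 : ~~ (n %| d0' * d3).
  apply/negP; have -> : d0' * d3 = A * (Q * R * R * S * S) by rewrite /d0' /d3; ring.
  have -> : n = A * (p * (Q * R * S)) by rewrite nE'; ring.
  rewrite dvdn_pmul2l // => h.
  by move/negP: pX'; apply; apply: dvdn_trans h; exact: dvdn_mulr.
have e01 : n %| d0' * d1.
  have -> : d0' * d1 = n * S by rewrite nE' /d0' /d1; ring.
  exact/dvdn_mulr/dvdnn.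
have e12 : n %| d1 * d2.
  have -> : d1 * d2 = n * p by rewrite nE' /d1 /d2; ring.
  exact/dvdn_mulr/dvdnn.
have e23 : n %| d2 * d3.
  have -> : d2 * d3 = n * R by rewrite nE' /d2 /d3; ring.
  exact/dvdn_mulr/dvdnn.
have e34 : n %| d3 * d4.
  have -> : d3 * d4 = n * A by rewrite nE' /d3 /d4; ring.
  exact/dvdn_mulr/dvdnn.
have e04 : n %| d0' * d4.
  have -> : d0' * d4 = n * Q by rewrite nE' /d0' /d4; ring.
  exact/dvdn_mulr/dvdnn.
have prodE i j : i != j -> (n %| dd i * dd j) = c5 i j.
  case: i => [[|[|[|[|[|?]]]]] ?] //; case: j => [[|[|[|[|[|?]]]]] ?] // _; rewrite /=.
  all: try first [ by rewrite e01 | by rewrite mulnC e01 | by rewrite e12 | by rewrite mulnC e12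
             | by rewrite e23 | by rewrite mulnC e23 | by rewrite e34 | by rewrite mulnC e34
             | by rewrite e04 | by rewrite mulnC e04
             | by rewrite (negPf n02) | by rewrite mulnC (negPf n02)
             | by rewrite (negPf n03) | by rewrite mulnC (negPf n03)
             | by rewrite (negPf nq) | by rewrite mulnC (negPf nq)
             | by rewrite (negPf nr) | by rewrite mulnC (negPf nr)
             | by rewrite (negPf ns) | by rewrite mulnC (negPf ns) ].
pose idx i := Id n (dd i).
have prodI i j : ideal_prod_zero (idx i) (idx j) = (n %| dd i * dd j).
  by have [di _ _] := vert i; have [dj _ _] := vert j; rewrite Id_prod0.
have E i j : AG_adj (idx i) (idx j) = c5 i j.
  case: (eqVneq i j) => [->|nij]; first by rewrite /AG_adj eqxx (negPf (c5_irr j)).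
  have nI : idx i != idx j.
    apply/eqP => eq; have [k /and3P[cki ncj kj]] := c5_sep nij.
    have ki : k != i by apply/eqP => ki; move: (c5_irr k); rewrite {2}ki cki.
    have := prodI k i; rewrite eq prodI !prodE // cki (negPf ncj).
    by [].
  by rewrite /AG_adj nI /= prodI prodE.
apply: (@C5_np _ _ _ idx).
- rewrite card_setZ //; apply: leq_trans (_ : 2 ^ 2 <= _) => //.
  by rewrite leq_exp2l.
- move=> i; have [di di1 dn] := vert i; rewrite inE Id_ideal //= Id_ne0 //=.
    by rewrite ann_ne0.
  by rewrite dn (ltn_trans _ di1).
- exact: E.
Qed.

Theorem lemma2 (p1 p2 p3 p4 a1 a2 a3 a4 n : nat) :
  prime p1 -> prime p2 -> prime p3 -> prime p4 ->
  uniq [:: p1; p2; p3; p4] ->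
  (0 < a1)%N -> (0 < a2)%N -> (0 < a3)%N -> (0 < a4)%N ->
  n = (p1 ^ a1 * p2 ^ a2 * p3 ^ a3 * p4 ^ a4)%N ->
  AG_perfect 'Z_n <->
  [/\ a1 = 1%N, a2 = 1%N, a3 = 1%N & a4 = 1%N].
Proof.
move=> pp1 pp2 pp3 pp4 hu h1 h2 h3 h4 nE; split; last first.
  case=> e1 e2 e3 e4; apply: (@perfect_sqf [:: p1; p2; p3; p4]) => //.
    by rewrite /= pp1 pp2 pp3 pp4.
  by rewrite nE e1 e2 e3 e4 !expn1 !big_cons big_nil muln1 !mulnA.
move: hu; rewrite /= !inE !negb_or => /and4P[/and3P[n12 n13 n14] /andP[n23 n24] n34 _].
have n21 : p2 != p1 by rewrite eq_sym.
have n31 : p3 != p1 by rewrite eq_sym.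
have n41 : p4 != p1 by rewrite eq_sym.
have n32 : p3 != p2 by rewrite eq_sym.
have n42 : p4 != p2 by rewrite eq_sym.
have n43 : p4 != p3 by rewrite eq_sym.
move=> per.
have one a : 0 < a -> (a <> 1 -> 0 < a.-1 /\ a = a.-1.+1).
  by case: a => [|[|a]].
split; apply/eqP; apply/negPn/negP => /eqP ne.
- have [hx ex] := one _ h1 ne.
  apply: (nonperf pp1 pp2 pp3 pp4 n12 n13 n14 n23 n24 n34 hx h2 h3 h4 _ per).
  by rewrite -ex.
- have [hx ex] := one _ h2 ne.
  apply: (nonperf pp2 pp1 pp3 pp4 n21 n23 n24 n13 n14 n34 hx h1 h3 h4 _ per).
  by rewrite -ex nE; ring.
- have [hx ex] := one _ h3 ne.
  apply: (nonperf pp3 pp1 pp2 pp4 n31 n32 n34 n12 n14 n24 hx h1 h2 h4 _ per).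
  by rewrite -ex nE; ring.
- have [hx ex] := one _ h4 ne.
  apply: (nonperf pp4 pp1 pp2 pp3 n41 n42 n43 n12 n13 n23 hx h1 h2 h3 _ per).
  by rewrite -ex nE; ring.
Qed.
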